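(* For any graph $\Gamma$, the dimer complex $X_{\mathcal{D}}(\Gamma)$ is a nonpositively curved cubed complex.
   Context: A graph is a nonempty 1-dimensional CW-complex with no loops and no isolated vertices (multiple edges allowed); $E$ is its edge set. The power group $2^E$ is the group of subsets of $E$ under symmetric difference. An even cycle is a finite set of edges forming an embedded circle with an even number of edges; two edge sets are independent if no edge of one shares a vertex with an edge of the other. $\mathcal{D}=\mathcal{D}(\Gamma)$ is the set of perfect matchings (edge sets meeting every vertex in exactly one edge). For a finite set $T$ of pairwise independent even cycles let $[T]=\bigcup_{t\in T}t$ (the product in $2^E$). The dimer complex $X_{\mathcal{D}}$ is the cubed complex with one $k$-cube for each pair $(A,S)$ where $A\in\mathcal{D}$ and $S$ is a set of $k$ pairwise independent even cycles with $[T]A\in\mathcal{D}$ for all $T\subset S$, the pairs $(A,S)$ and $([T]A,S)$ ($T\subset S$) giving the same cube; the vertices of this cube are the perfect matchings $[T]A$, $T\subset S$, and its faces are the cubes of $(A,S')$, $S'\subset S$ (so $A,B\in\mathcal{D}$ are joined by an edge iff $AB$ is an even cycle). A cubed complex is nonpositively curved if the link of each 0-cell is a simplicial complex and is a flag complex. *)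

(* Defs.v *)
(* A graph is given by a type V of 0-cells, a type E of
   1-cells, and the two endpoint maps src, tgt : E -> V (orientation is
   irrelevant; everything below is symmetric in src/tgt).  Graphs may be
   infinite and locally infinite; multiple edges are allowed. *)
From Stdlib Require Import Arith List PeanoNat.
Import ListNotations.

Section Dimer.
Variables (V E : Type) (src tgt : E -> V).

(* subsets of E, i.e. elements of the power group 2^E *)
Definition eset := E -> Prop.
Definition cset := eset -> Prop.

Definition incident (e : E) (v : V) : Prop := src e = v \/ tgt e = v.

Definition share_vertex (e f : E) : Prop :=
  exists v, incident e v /\ incident f v.

(* product in the power group 2^E = symmetric difference *)
Definition esymdiff (X Y : eset) : eset :=
  fun e => (X e /\ ~ Y e) \/ (~ X e /\ Y e).

Definition csymdiff (X Y : cset) : cset :=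
  fun c => (X c /\ ~ Y c) \/ (~ X c /\ Y c).

Definition csubset (T S : cset) : Prop := forall c, T c -> S c.

Definition cfinite (S : cset) : Prop :=
  exists l : list eset, forall c, S c <-> In c l.

Definition perfect_matching (A : eset) : Prop :=
  forall v, exists e, A e /\ incident e v /\
    forall f, A f -> incident f v -> f = e.

(* even cycle: a finite set of edges forming an embedded circle
   v_0 -e_0- v_1 -e_1- ... -e_{n-1}- v_0 with distinct vertices, distinct
   edges, and n even (n >= 2; n = 2 means two parallel edges). *)
Definition even_cycle (C : eset) : Prop :=
  exists (n : nat) (vs : nat -> V) (es : nat -> E),
    2 <= n /\ Nat.Even n /\
    (forall i j, i < n -> j < n -> vs i = vs j -> i = j) /\
    (forall i j, i < n -> j < n -> es i = es j -> i = j) /\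
    (forall i, i < n ->
        (src (es i) = vs i /\ tgt (es i) = vs (S i mod n)) \/
        (tgt (es i) = vs i /\ src (es i) = vs (S i mod n))) /\
    (forall e, C e <-> exists i, i < n /\ es i = e).

Definition independent (X Y : eset) : Prop :=
  forall e f, X e -> Y f -> ~ share_vertex e f.

(* [T] = union of the cycles in T (their product in 2^E) *)
Definition bracket (T : cset) : eset := fun e => exists c, T c /\ c e.

Definition act (T : cset) (A : eset) : eset := esymdiff (bracket T) A.

(* (A,S) defines a cube of the dimer complex *)
Definition cube_ok (A : eset) (S : cset) : Prop :=
  perfect_matching A /\ cfinite S /\
  (forall c, S c -> even_cycle c) /\
  (forall c d, S c -> S d -> c <> d -> independent c d) /\
  (forall T, csubset T S -> perfect_matching (act T A)).

(* A corner of a cube: a representative (B,S) of the cube together with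
   the vertex [T0]B of that cube (T0 a subset of S). *)
Record corner := Corner { cbase : eset; ccyc : cset; cvtx : cset }.

Definition is_corner (A : eset) (k : corner) : Prop :=
  cube_ok (cbase k) (ccyc k) /\ csubset (cvtx k) (ccyc k) /\
  act (cvtx k) (cbase k) = A.

(* The identification (B,S) ~ ([T]B,S) of cubes, which sends the vertex
   [T0]B of the first representative to the vertex indexed by T0 (+) T of the
   second one; two corners are equal iff related in this way. *)
Definition corner_eq (k k' : corner) : Prop :=
  ccyc k' = ccyc k /\
  exists T, csubset T (ccyc k) /\ cbase k' = act T (cbase k) /\
            cvtx k' = csymdiff (cvtx k) T.

Definition edge_corner (A : eset) (c : eset) : corner :=
  Corner A (fun d => d = c) (fun _ => False).

(* Vertices of the link of A: corners at A of 1-cubes. *)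
Definition link_vertex (A : eset) (u : corner) : Prop :=
  is_corner A u /\ exists c, forall d, ccyc u d <-> d = c.

(* u is a vertex of the simplex of the link of A determined by the corner k
   at A (k = (B,S,T0) with [T0]B = A): u is the corner at A of the edge of
   the cube in some direction c in S. *)
Definition simplex_vertex (A : eset) (k : corner) (u : corner) : Prop :=
  exists c, ccyc k c /\ corner_eq (edge_corner A c) u.

(* The link of A is a simplicial complex: every simplex has pairwise
   distinct vertices, and a simplex is determined by its vertex set. *)
Definition link_simplicial (A : eset) : Prop :=
  (forall k, is_corner A k -> forall c d, ccyc k c -> ccyc k d ->
      corner_eq (edge_corner A c) (edge_corner A d) -> c = d) /\
  (forall k1 k2, is_corner A k1 -> is_corner A k2 ->
      (forall u, simplex_vertex A k1 u <-> simplex_vertex A k2 u) ->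
      corner_eq k1 k2).

(* The link of A is flag: any finite set of link vertices which pairwise
   span an edge of the link spans a simplex of the link. *)
Definition link_flag (A : eset) : Prop :=
  forall L : list corner,
    (forall u, In u L -> link_vertex A u) ->
    (forall u v, In u L -> In v L -> ~ corner_eq u v ->
       exists k, is_corner A k /\
         forall w, simplex_vertex A k w <-> (corner_eq u w \/ corner_eq v w)) ->
    exists k, is_corner A k /\
      forall w, simplex_vertex A k w <-> exists u, In u L /\ corner_eq u w.

(* X_D is nonpositively curved: the link of every 0-cell (perfect
   matching) is a simplicial flag complex. *)
Definition dimer_npc : Prop :=
  forall A, perfect_matching A -> link_simplicial A /\ link_flag A.

End Dimer.

(* Main.v *)
Require Import Defs.
From Stdlib Require Import Arith List PeanoNat.
From Stdlib Require Import Classical FunctionalExtensionality PropExtensionality.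

Lemma pext {A : Type} (P Q : A -> Prop) : (forall x, P x <-> Q x) -> P = Q.
Proof. intro H; apply functional_extensionality; intro x; apply propositional_extensionality; apply H. Qed.

Section Proofs.
Variables (V E : Type) (src tgt : E -> V).
Local Notation pm := (perfect_matching V E src tgt).
Local Notation inc := (incident V E src tgt).
Local Notation indep := (independent V E src tgt).
Local Notation act' := (act E).
Local Notation br := (bracket E).
Local Notation csd := (csymdiff E).
Local Notation csub := (csubset E).
Local Notation cok := (cube_ok V E src tgt).
Local Notation isc := (is_corner V E src tgt).
Local Notation ceq := (corner_eq E).
Local Notation edg := (edge_corner E).
Local Notation sv := (simplex_vertex E).
Local Notation lv := (link_vertex V E src tgt).

Definition disj (S : cset E) : Prop :=
  forall c d, S c -> S d -> c <> d -> forall e, c e -> d e -> False.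

Lemma indep_disj (S : cset E) :
  (forall c d, S c -> S d -> c <> d -> indep c d) -> disj S.
Proof.
  intros H c d Sc Sd ne e ce de. apply (H c d Sc Sd ne e e ce de).
  exists (src e). split; left; reflexivity.
Qed.

Lemma br_sd (S T T' : cset E) : disj S -> csub T S -> csub T' S ->
  forall e, br (csd T T') e <-> ((br T e /\ ~ br T' e) \/ (~ br T e /\ br T' e)).
Proof.
  intros D HT HT' e. unfold bracket, csymdiff. split.
  - intros [c [[[Tc nT'c] | [nTc T'c]] ce]].
    + left. split; [eauto|]. intros [d [T'd de]].
      destruct (classic (c = d)) as [<-|ne]; [tauto|].
      apply (D c d (HT c Tc) (HT' d T'd) ne e ce de).
    + right. split; [|eauto]. intros [d [Td de]].
      destruct (classic (c = d)) as [<-|ne]; [tauto|].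
      apply (D c d (HT' c T'c) (HT d Td) ne e ce de).
  - intros [[[c [Tc ce]] nb] | [nb [c [T'c ce]]]].
    + exists c. split; [|auto]. left. split; auto. intro T'c; apply nb; eauto.
    + exists c. split; [|auto]. right. split; auto. intro Tc; apply nb; eauto.
Qed.

Lemma act_act (S T T' : cset E) (B : eset E) : disj S -> csub T S -> csub T' S ->
  act' T (act' T' B) = act' (csd T T') B.
Proof.
  intros D HT HT'. apply pext; intro e. unfold act at 1 3, esymdiff.
  rewrite (br_sd S T T' D HT HT' e). unfold act, esymdiff. tauto.
Qed.

Lemma act_inv (T : cset E) (A B : eset E) : act' T B = A -> B = act' T A.
Proof. intro H; subst; apply pext; intro e; unfold act, esymdiff; tauto. Qed.

Lemma act_empty (T : cset E) (B : eset E) : (forall c, ~ T c) -> act' T B = B.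
Proof.
  intro H; apply pext; intro e; unfold act, esymdiff, bracket.
  split; [intros [[[c [Tc _]] _]|[_ Be]]; [exfalso; eapply H; eauto|auto]|].
  intro Be; right; split; auto; intros [c [Tc _]]; eapply H; eauto.
Qed.

Lemma ceq_refl (k : corner E) : ceq k k.
Proof.
  destruct k as [B S T]. split; [reflexivity|].
  exists (fun _ => False). split; [intros c []|]. simpl. split.
  - symmetry; apply act_empty; auto.
  - apply pext; intro c; unfold csymdiff; tauto.
Qed.

Lemma ceq_sym (k k' : corner E) : ceq k k' -> ceq k' k.
Proof.
  destruct k as [B S T], k' as [B' S' T']; unfold corner_eq; simpl.
  intros [-> [X [HX [-> ->]]]]. split; [reflexivity|]. exists X. split; auto. split.
  - apply act_inv; reflexivity.
  - apply pext; intro c; unfold csymdiff; tauto.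
Qed.

Lemma ceq_trans (k k' k'' : corner E) : disj (ccyc E k) -> ceq k k' -> ceq k' k'' -> ceq k k''.
Proof.
  destruct k as [B S T], k' as [B' S' T'], k'' as [B'' S'' T'']; unfold corner_eq; simpl.
  intros D [-> [X [HX [-> ->]]]] [-> [Y [HY [-> ->]]]]. split; [reflexivity|].
  exists (csd X Y). split; [intros c; unfold csymdiff; intros [[? _]|[_ ?]]; auto|]. split.
  - rewrite (act_act S Y X B D HY HX). f_equal. apply pext; intro c; unfold csymdiff; tauto.
  - apply pext; intro c; unfold csymdiff; tauto.
Qed.

Definition pm_at (X : eset E) (v : V) : Prop :=
  exists e, X e /\ inc e v /\ forall f, X f -> inc f v -> f = e.

Lemma pm_at_transfer (X Y : eset E) v : (forall f, inc f v -> (X f <-> Y f)) -> pm_at Y v -> pm_at X v.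
Proof.
  intros H [e [Ye [ie U]]]. exists e. split; [apply H; auto|]. split; auto.
  intros f Xf iff'. apply U; auto. apply H; auto.
Qed.

Lemma main_pm (A : eset E) (S : cset E) : pm A ->
  (forall c d, S c -> S d -> c <> d -> indep c d) ->
  (forall c, S c -> pm (act' (fun d => d = c) A)) ->
  forall T, csub T S -> pm (act' T A).
Proof.
  intros HA HI HS T HT v. change (pm_at (act' T A) v).
  destruct (classic (exists c, T c /\ exists e, c e /\ inc e v)) as [[c [Tc [e0 [ce0 ie0]]]]|N].
  - apply pm_at_transfer with (Y := act' (fun d => d = c) A); [|apply (HS c (HT c Tc) v)].
    intros f iff'. assert (Hb : br T f <-> c f).
    { unfold bracket; split; [|eauto]. intros [d [Td df]].
      destruct (classic (d = c)) as [->|ne]; auto. exfalso.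
      apply (HI c d (HT c Tc) (HT d Td) (fun h => ne (eq_sym h)) e0 f ce0 df).
      exists v; split; auto. }
    assert (Hb' : br (fun d => d = c) f <-> c f).
    { unfold bracket; split; [intros [d [-> ?]]; auto|eauto]. }
    unfold act, esymdiff. rewrite Hb, Hb'. tauto.
  - apply pm_at_transfer with (Y := A); [|apply (HA v)].
    intros f iff'. assert (~ br T f) by (intros [c [Tc cf]]; apply N; eauto).
    unfold act, esymdiff. tauto.
Qed.

Lemma cube_shift (B : eset E) (S T0 : cset E) : cok B S -> csub T0 S -> cok (act' T0 B) S.
Proof.
  intros [HB [Hf [He [Hi Hp]]]] HT0. assert (D := indep_disj S Hi).
  split; [apply Hp; auto|split; [auto|split; [auto|split; [auto|]]]].
  intros T HT. rewrite (act_act S _ _ B D HT HT0). apply Hp.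
  intros c; unfold csymdiff; intros [[? _]|[_ ?]]; auto.
Qed.

Lemma edge_ccyc (c d : eset E) (A A' : eset E) : ceq (edg A c) (edg A' d) -> c = d.
Proof.
  intros [H _]. simpl in H. assert (h := f_equal (fun P => P c) H). simpl in h.
  rewrite h. reflexivity.
Qed.

Lemma simplicial (A : eset E) : pm A -> link_simplicial V E src tgt A.
Proof.
  intros HA. split.
  - intros k _ c d _ _ H. exact (edge_ccyc c d A A H).
  - intros [B1 S1 T1] [B2 S2 T2] [C1 [HT1 H1]] [C2 [HT2 H2]] H. simpl in *.
    assert (HS : S2 = S1).
    { apply pext; intro c; split; intro Sc.
      - destruct (proj2 (H (edg A c)) (ex_intro _ c (conj Sc (ceq_refl _)))) as [c' [S1c' Hc']].
        rewrite <- (edge_ccyc _ _ _ _ Hc'); auto.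
      - destruct (proj1 (H (edg A c)) (ex_intro _ c (conj Sc (ceq_refl _)))) as [c' [S2c' Hc']].
        rewrite <- (edge_ccyc _ _ _ _ Hc'); auto. }
    subst S2. destruct C1 as [_ [_ [_ [Hi _]]]]. assert (D := indep_disj S1 Hi).
    split; [reflexivity|]. exists (csd T1 T2). simpl. split.
    { intros c; unfold csymdiff; intros [[? _]|[_ ?]]; auto. }
    split.
    + apply act_inv in H2. rewrite H2, <- H1, (act_act S1 T2 T1 B1 D HT2 HT1).
      f_equal. apply pext; intro c; unfold csymdiff; tauto.
    + apply pext; intro c; unfold csymdiff; tauto.
Qed.

Definition cycs (L : list (corner E)) : cset E :=
  fun c => exists u, In u L /\ forall d, ccyc E u d <-> d = c.

Lemma cycs_finite (A : eset E) (L : list (corner E)) : (forall u, In u L -> lv A u) -> cfinite E (cycs L).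
Proof.
  induction L as [|u L IH]; intros HL.
  - exists nil. intro c; unfold cycs; simpl; split; [intros [u [[] _]]|intros []].
  - destruct IH as [l Hl]; [intros w Hw; apply HL; simpl; auto|].
    destruct (HL u (or_introl eq_refl)) as [_ [cu Hcu]].
    exists (cu :: l). intro c. unfold cycs in *. simpl. rewrite <- Hl. split.
    + intros [w [[<-|Hw] Hd]]; [left|right; eauto].
      apply (proj1 (Hd cu)). apply Hcu; reflexivity.
    + intros [<-|[w [Hw Hd]]]; [exists u; auto|exists w; auto].
Qed.

Lemma sv_iff (A : eset E) (u w : corner E) (c : eset E) : isc A u ->
  (forall d, ccyc E u d <-> d = c) -> (ceq u w <-> ceq (edg A c) w).
Proof.
  intros [_ [HT0 HA]] Hc.
  assert (Dc : forall X : cset E, (forall d, X d <-> d = c) -> disj X).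
  { intros X HX a b Xa Xb ne. exfalso. apply ne. apply HX in Xa. apply HX in Xb. congruence. }
  assert (E1 : ceq (edg A c) u).
  { destruct u as [B S T0]; simpl in *. split.
    - simpl. apply pext; intro d; rewrite Hc; tauto.
    - exists T0. simpl. split; [intros d Hd; apply Hc, HT0, Hd|]. split.
      + apply act_inv; auto.
      + apply pext; intro d; unfold csymdiff; tauto. }
  split; intro H.
  - apply (ceq_trans _ u); auto. apply Dc. simpl. tauto.
  - apply (ceq_trans _ (edg A c)); [apply (Dc _ Hc)|apply ceq_sym; auto|auto].
Qed.

Lemma flag (A : eset E) : pm A -> link_flag V E src tgt A.
Proof.
  intros HA L HL Hpair.
  set (S := cycs L).
  assert (Hind : forall c d, S c -> S d -> c <> d -> indep c d).
  { intros c d [u [Hu Hcu]] [w [Hw Hcw]] ne.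
    assert (nuw : ~ ceq u w).
    { intros [Heq _]. apply ne. apply (f_equal (fun P => P d)) in Heq.
      symmetry. apply Hcu. rewrite <- Heq. apply Hcw. reflexivity. }
    destruct (Hpair u w Hu Hw nuw) as [k [Hk Hsv]].
    assert (inS : forall z cz, (forall d, ccyc E z d <-> d = cz) -> (ceq u z \/ ceq w z) -> ccyc E k cz).
    { intros z cz Hz Hor. destruct (proj2 (Hsv z) Hor) as [c' [kc' Hc']].
      destruct Hc' as [Heq _]. simpl in Heq. apply (f_equal (fun P => P c')) in Heq.
      assert (c' = cz) by (apply Hz; rewrite Heq; reflexivity). subst; auto. }
    destruct Hk as [[_ [_ [_ [Hi _]]]] _].
    apply Hi; auto.
    - apply (inS u c Hcu); left; apply ceq_refl.
    - apply (inS w d Hcw); right; apply ceq_refl. }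
  assert (Hone : forall c, S c -> pm (act' (fun d => d = c) A)).
  { intros c [u [Hu Hcu]]. destruct (HL u Hu) as [[Hok [HT0 Hact]] _].
    destruct u as [B Su T0]; simpl in *. rewrite <- Hact.
    apply (cube_shift B Su T0 Hok HT0). intros d ->; apply Hcu; reflexivity. }
  exists (Corner E A S (fun _ => False)). split.
  - split; [|split].
    + simpl. split; [auto|split; [apply (cycs_finite A L HL)|split; [|split]]].
      * intros c [u [Hu Hcu]]. destruct (HL u Hu) as [[[_ [_ [He _]]] _] _].
        apply He, Hcu; reflexivity.
      * exact Hind.
      * apply main_pm; auto.
    + intros c [].
    + simpl; apply act_empty; auto.
  - intro w. unfold simplex_vertex; simpl. split.
    + intros [c [[u [Hu Hcu]] Hw]]. exists u; split; auto.
      apply (sv_iff A u w c); auto. apply HL; auto.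
    + intros [u [Hu Hw]]. destruct (HL u Hu) as [Hc [c Hcu]].
      exists c. split; [exists u; auto|]. apply (sv_iff A u w c); auto.
Qed.

End Proofs.

Theorem theorem6p3 (V E : Type) (src tgt : E -> V)
  (Hnonempty : inhabited V)
  (Hnoloop : forall e : E, src e <> tgt e)
  (Hnoisolated : forall v : V, exists e : E, src e = v \/ tgt e = v) :
  dimer_npc V E src tgt.
Proof.
  intros A HA. split; [apply simplicial|apply flag]; auto.
Qed.
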